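(* Let $S\subset\mathbb Z_{\ge1}$. Then $\langle S\rangle_{\mathcal C}$ is the set of all integers of the form $$k+\sum_{j=1}^r(\overline\beta_{b_j}-\overline\beta_{a_j})+s$$ where $r\ge0$, $s\in\mathcal S_\Gamma\cup\{0\}$, $k\in S$, $a_j,b_j\in\{1,\dots,g\}$ and $k\le\overline\beta_{a_1}<\overline\beta_{b_1}\le\overline\beta_{a_2}<\overline\beta_{b_2}\le\cdots\le\overline\beta_{a_r}<\overline\beta_{b_r}$.
   Context: Let $\Gamma$ be a singular irreducible plane branch with multiplicity $n$, Puiseux characteristic exponents $\beta_1<\dots<\beta_g$, $e_0=n$, $e_j=\gcd(e_{j-1},\beta_j)$, $n_j=e_{j-1}/e_j$, $\overline\beta_1=\beta_1$, $\overline\beta_j=n_{j-1}\overline\beta_{j-1}-\beta_{j-1}+\beta_j$ ($2\le j\le g$), and semigroup $\mathcal S_\Gamma$ generated by $n,\overline\beta_1,\dots,\overline\beta_g$. A subset $S\subset\mathbb Z_{>0}$ is a $\mathcal C$-collection if $S+\mathcal S_\Gamma\subset S$ and for all $m\in S$ and $1\le j\le k\le g$ with $m\le\overline\beta_j$, $m+\overline\beta_k-\overline\beta_j\in S$. $\langle S\rangle_{\mathcal C}$ denotes the smallest $\mathcal C$-collection containing $S$. *)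

(* Defs.v *)
From mathcomp Require Import all_boot.
Set Implicit Arguments. Unset Strict Implicit. Unset Printing Implicit Defensive.

(* Puiseux data of a branch: multiplicity n, genus g, characteristic
   exponents beta 1 < ... < beta g  (beta 0 is unused). *)

Fixpoint e_seq (n : nat) (beta : nat -> nat) (j : nat) : nat :=
  match j with
  | 0 => n
  | j'.+1 => gcdn (e_seq n beta j') (beta j'.+1)
  end.

Definition n_seq (n : nat) (beta : nat -> nat) (j : nat) : nat :=
  e_seq n beta j.-1 %/ e_seq n beta j.

(* betabar_1 = beta_1, betabar_{j+1} = n_j betabar_j - beta_j + beta_{j+1}.
   Written as n_j*betabar_j + beta_{j+1} - beta_j, which equals the paper's
   expression since beta_j < beta_{j+1}. betabar 0 is set to n (unused). *)
Fixpoint betabar (n : nat) (beta : nat -> nat) (j : nat) : nat :=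
  match j with
  | 0 => n
  | j'.+1 =>
      match j' with
      | 0 => beta 1
      | _ => n_seq n beta j' * betabar n beta j' + beta j'.+1 - beta j'
      end
  end.

Definition puiseux_char (n g : nat) (beta : nat -> nat) : Prop :=
  1 < n /\ 0 < g /\ n < beta 1 /\
  (forall j, 1 <= j < g -> beta j < beta j.+1) /\
  (forall j, 1 <= j <= g -> e_seq n beta j < e_seq n beta j.-1) /\
  e_seq n beta g = 1.

Definition in_semigroup (n g : nat) (beta : nat -> nat) (s : nat) : Prop :=
  exists (c0 : nat) (c : nat -> nat),
    s = c0 * n + \sum_(1 <= j < g.+1) c j * betabar n beta j.

Definition is_Ccollection (n g : nat) (beta : nat -> nat) (S : nat -> Prop) : Prop :=
  [/\ (forall m, S m -> 0 < m),
      (forall m s, S m -> in_semigroup n g beta s -> S (m + s))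
    & (forall m j k, S m -> 1 <= j -> j <= k -> k <= g ->
         m <= betabar n beta j ->
         S (m + betabar n beta k - betabar n beta j))].

Definition Cgen (n g : nat) (beta : nat -> nat) (S : nat -> Prop) (m : nat) : Prop :=
  forall T : nat -> Prop, is_Ccollection n g beta T ->
    (forall x, S x -> T x) -> T m.

(* Main.v *)
Require Import Defs.
From mathcomp Require Import all_boot.
From mathcomp Require Import zify.

Section Aux.
Variables (n g : nat) (beta : nat -> nat).
Hypothesis P : puiseux_char n g beta.
Local Notation B := (betabar n beta).

Lemma e_pos j : 0 < e_seq n beta j.
Proof.
case: P => hn _.
elim: j => [|j IH] /=; first by lia.
by rewrite gcdn_gt0 IH.
Qed.

Lemma n_ge2 j : 1 <= j <= g -> 2 <= n_seq n beta j.
Proof.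
move=> hj; case: P => _ [_ [_ [_ [He _]]]].
have := He j hj; case: j hj => [|j] hj; first by lia.
rewrite /n_seq /= => hlt.
have hd : gcdn (e_seq n beta j) (beta j.+1) %| e_seq n beta j by apply: dvdn_gcdl.
have := divnK hd; have := e_pos j.
have := e_pos j.+1; rewrite /= .
set q := _ %/ _; set d := gcdn _ _; set E := e_seq n beta j.
move=> h1 h2 h3.
case: q h3 => [|[|q]] h3; lia.
Qed.

Lemma bb_step j : 1 <= j < g -> (B j).*2 < B j.+1.
Proof.
move=> hj; case: j hj => [|j] hj; first by lia.
have hb : betabar n beta j.+2 =
  n_seq n beta j.+1 * betabar n beta j.+1 + beta j.+2 - beta j.+1 by [].
rewrite hb.
have hn := n_ge2 j.+1 ltac:(lia).
case: P => _ [_ [_ [Hb _]]].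
have := Hb j.+1 hj.
have : 2 * B j.+1 <= n_seq n beta j.+1 * B j.+1 by apply: leq_mul.
lia.
Qed.

Lemma bb_lt i j : 1 <= i -> i < j -> j <= g -> B i < B j.
Proof.
move=> hi; elim: j => [|j IH] hij hj; first by lia.
have hs := bb_step j ltac:(lia).
case: (ltnP i j) => h.
  have := IH h ltac:(lia); lia.
have -> : i = j by lia.
lia.
Qed.

Lemma bb_le i j : 1 <= i -> i <= j -> j <= g -> B i <= B j.
Proof.
move=> hi hij hj; case: (ltnP i j) => h.
  by apply: ltnW; apply: bb_lt.
by have -> : i = j by lia.
Qed.

Lemma bb_lt_inv i j : 1 <= i <= g -> 1 <= j <= g -> B i < B j -> i < j.
Proof.
move=> hi hj h; case: (ltnP i j) => // hji.
have := bb_le j i ltac:(lia) hji ltac:(lia); lia.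
Qed.

Lemma semi0 : in_semigroup n g beta 0.
Proof.
exists 0, (fun _ => 0); rewrite big1 //.
Qed.

Lemma semiD s t : in_semigroup n g beta s -> in_semigroup n g beta t ->
  in_semigroup n g beta (s + t).
Proof.
move=> [c0 [c ->]] [d0 [d ->]].
exists (c0 + d0), (fun j => c j + d j).
have E : \sum_(1 <= j < g.+1) (c j + d j) * B j =
  \sum_(1 <= j < g.+1) c j * B j + \sum_(1 <= j < g.+1) d j * B j.
  by rewrite -big_split; apply: eq_bigr => i _; rewrite mulnDl.
rewrite E; lia.
Qed.

End Aux.

Theorem mainTheorem6 (n g : nat) (beta : nat -> nat) (S : nat -> Prop) :
  puiseux_char n g beta ->
  (forall m, S m -> 1 <= m) ->
  forall m : nat,
    Cgen n g beta S m <->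
    exists (r : nat) (a b : nat -> nat) (s k : nat),
      (s = 0 \/ in_semigroup n g beta s) /\
      S k /\
      (forall j, 1 <= j <= r -> (1 <= a j <= g) && (1 <= b j <= g)) /\
      (0 < r -> k <= betabar n beta (a 1)) /\
      (forall j, 1 <= j <= r -> betabar n beta (a j) < betabar n beta (b j)) /\
      (forall j, 1 <= j < r -> betabar n beta (b j) <= betabar n beta (a j.+1)) /\
      m = k + \sum_(1 <= j < r.+1) (betabar n beta (b j) - betabar n beta (a j)) + s.
Proof.
move=> P HS m.
set B := betabar n beta.
split.
- move=> HC; pattern m; apply HC; last first.
    move=> x Sx; exists 0, (fun _ => 1), (fun _ => 1), 0, x.
    split; first by left.
    split => //.
    do 4 (split; first by move=> *; lia).
    by rewrite big_geq // !addn0.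
  split.
  + move=> x [r [a [b [s [k [_ [Sk [_ [_ [_ [_ ->]]]]]]]]]]].
    have := HS k Sk; lia.
  + move=> x t [r [a [b [s [k [Hs [Sk [H1 [H2 [H3 [H4 ->]]]]]]]]]]] Ht.
    exists r, a, b, (s + t), k; split.
      right; case: Hs => [->|Hs] //; exact: semiD.
    do 5 (split => //).
    lia.
  + move=> x jj kk [r [a [b [s [k [Hs [Sk [H1 [H2 [H3 [H4 Hx]]]]]]]]]]] Hj Hjk Hk Hxj.
    case: (ltnP jj kk) => hjk; last first.
      have -> : kk = jj by lia.
      rewrite addnK; exists r, a, b, s, k; by do 6 (split; first done).
    have hB := @bb_lt _ _ _ P _ _ Hj hjk Hk.
    rewrite -/B in hB Hxj *.
    set Sm := \sum_(1 <= j < r.+1) _ in Hx.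
    have hk1 := HS k Sk.
    have key : 0 < r -> B (b r) <= B jj.
      move=> hr; rewrite leqNgt; apply/negP => hlt.
      have := H1 r ltac:(lia); move/andP => [ha hb].
      have hjb := @bb_lt_inv _ _ _ P jj (b r) ltac:(lia) hb hlt.
      have hab := @bb_lt_inv _ _ _ P _ _ ha hb (H3 r ltac:(lia)).
      have h1 := @bb_le _ _ _ P (a r) ((b r).-1) ltac:(lia) ltac:(lia) ltac:(lia).
      have h2 := @bb_le _ _ _ P jj ((b r).-1) ltac:(lia) ltac:(lia) ltac:(lia).
      have h3 := @bb_step _ _ _ P ((b r).-1) ltac:(lia).
      have e : (b r).-1.+1 = b r by lia.
      rewrite e in h3.
      have hS : B (b r) - B (a r) <= Sm.
        have er : r = r.-1.+1 by lia.
        rewrite /Sm [in X in _ <= X]er big_nat_recr //= -er; exact: leq_addl.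
      rewrite -/B in h1 h2 h3 Hxj; lia.
    exists r.+1, (fun i => if i == r.+1 then jj else a i),
      (fun i => if i == r.+1 then kk else b i), s, k.
    split => //; split => //.
    split.
      move=> i hi /=; have [e|hne] := eqVneq i r.+1.
        rewrite /=; apply/andP; lia.
      apply: H1; move/eqP: hne; lia.
    split.
      move=> _; case: (posnP r) => [r0|rpos].
        rewrite r0 /=; lia.
      have -> : (1 == r.+1) = false by apply/eqP; lia.
      exact: H2.
    split.
      move=> i hi /=; have [e|hne] := eqVneq i r.+1; first exact: hB.
      apply: H3; move/eqP: hne; lia.
    split.
      move=> i hi; have -> : (i == r.+1) = false by apply/eqP; lia.
      have [hir|hir] := eqVneq i.+1 r.+1.
        have -> : i = r by lia.
        apply: key; lia.
      apply: H4; move/eqP: hir; lia.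
    rewrite big_nat_recr //= eqxx.
    rewrite (eq_big_nat _ _ (F2 := fun j => B (b j) - B (a j))); last first.
      move=> i hi /=; have -> : (i == r.+1) = false by apply/eqP; lia.
      by [].
    rewrite -/Sm. rewrite Hx. lia.
- move=> [r [a [b [s [k [Hs [Sk [H1 [H2 [H3 [H4 ->]]]]]]]]]]] T HT HST.
  case: HT => Tpos Tsemi Ttr.
  have main : forall i, i <= r ->
    T (k + \sum_(1 <= j < i.+1) (B (b j) - B (a j))) /\
    (0 < i -> k + \sum_(1 <= j < i.+1) (B (b j) - B (a j)) <= B (b i)).
    elim => [|i IH] hi.
      rewrite big_geq // addn0; split => //; exact: HST.
    have [IT IB] := IH ltac:(lia).
    set x := k + _ in IT IB.
    have hxa : x <= B (a i.+1).
      case: (posnP i) => [i0|ipos].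
        rewrite /x i0 big_geq // addn0; apply: H2; lia.
      have := H4 i ltac:(lia); have := IB ipos; lia.
    have := H1 i.+1 ltac:(lia) => /andP [ha hb].
    have hab := H3 i.+1 ltac:(lia).
    have hab' := @bb_lt_inv _ _ _ P _ _ ha hb hab.
    rewrite big_nat_recr //=.
    have -> : k + (\sum_(1 <= j < i.+1) (B (b j) - B (a j)) + (B (b i.+1) - B (a i.+1)))
       = x + B (b i.+1) - B (a i.+1) by rewrite /x; lia.
    split; last by lia.
    apply: Ttr => //; lia.
  have [Tr _] := main r (leqnn r).
  case: Hs => [->|Hs]; first by rewrite addn0.
  exact: Tsemi.
Qed.
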